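(* Let $f\in\mathbb{K}_C[[\underline{x}]][y]$ be a free polynomial of degree $n$ with characteristic exponents $m_1<\dots<m_h$, and let $r_0^1,\dots,r_0^e,r_1,\dots,r_h$ and $e_1,\dots,e_h$ be as in the context. Let $\underline{\alpha}=(\alpha_0^1,\dots,\alpha_0^e,\alpha_1,\dots,\alpha_h)$ and $\underline{\beta}=(\beta_0^1,\dots,\beta_0^e,\beta_1,\dots,\beta_h)$ be elements of $\mathbb{Z}^e\times\mathbb{N}^h$ with $0\le\alpha_i,\beta_i<e_i$ for all $i\in\{1,\dots,h\}$. If $\sum_{i=1}^e\alpha_0^ir_0^i+\sum_{j=1}^h\alpha_jr_j=\sum_{i=1}^e\beta_0^ir_0^i+\sum_{j=1}^h\beta_jr_j$, then $\underline{\alpha}=\underline{\beta}$.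
   Context: $\mathbb{K}$ is an algebraically closed field of characteristic $0$, $\underline{x}=(x_1,\dots,x_e)$. $C\subseteq\mathbb{R}^e$ is a line free cone (nonnegative real combinations of finitely many vectors of $\mathbb{Q}^e$, with $v\in C\setminus\{0\}\Rightarrow -v\notin C$). $\mathbb{K}_C[[\underline{x}]]$ is the ring of formal series with exponents in $C\cap\mathbb{Z}^e$; $\mathbb{K}_C[[\underline{x}^{1/N}]]$ the ring of series $\sum a_p\underline{x}^{p/N}$, $p\in\mathbb{Z}^e$, $p/N\in C$. Fix a total additive order $\le$ on $\mathbb{Z}^e$ compatible with $C$, extended to $\mathbb{Q}^e$ by clearing denominators; $O(z)$ is the $\le$-least exponent of a nonzero series $z$. A monic $g\in\mathbb{K}_C[[\underline{x}]][y]$ of degree $N$ is free if irreducible in $\mathbb{K}_C[[\underline{x}]][y]$ with a root in $\mathbb{K}_C[[\underline{x}^{1/N}]]$. The roots $y_1,\dots,y_n$ of $f$ lie in $\mathbb{K}_C[[\underline{x}^{1/n}]]$; characteristic exponents are the $m\in\mathbb{Z}^e$ with $m/n=O(y_i-y_j)$ for some $y_i\ne y_j$. Sequences: $D_1=n^e$, $D_{i+1}$ the gcd of the $e\times e$ minors of $(nI_e,m_1^T,\dots,m_i^T)$ ($1\le i\le h$); $e_i=D_i/D_{i+1}$; $r_0^k=n\varepsilon_k$ where $\varepsilon_1,\dots,\varepsilon_e$ is the standard basis of $\mathbb{Z}^e$; $r_1=m_1$, $r_i=e_{i-1}r_{i-1}+m_i-m_{i-1}$ ($2\le i\le h$). 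*)

(* Defs.v *)
From HB Require Import structures.
From mathcomp Require Import all_boot all_order all_algebra.
From mathcomp Require Import boolp classical_sets fsbigop.
From mathcomp Require Import Rstruct.
Set Implicit Arguments.
Unset Strict Implicit.
Unset Printing Implicit Defensive.
Import Order.TTheory GRing.Theory Num.Theory.
Local Open Scope ring_scope.

Section Defs.
Variable e : nat.

Definition realvec_of_rat (v : 'rV[rat]_e) : 'rV[Rdefinitions.R]_e := map_mx ratr v.
Definition realvec_of_int (v : 'rV[int]_e) : 'rV[Rdefinitions.R]_e :=
  map_mx (fun z : int => z%:~R) v.

Definition in_cone (gens : seq 'rV[rat]_e) (v : 'rV[Rdefinitions.R]_e) : Prop :=
  exists c : 'I_(size gens) -> Rdefinitions.R,
    (forall i, 0 <= c i) /\ v = \sum_(i < size gens) c i *: realvec_of_rat gens`_i.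

Definition line_free (gens : seq 'rV[rat]_e) : Prop :=
  forall v, in_cone gens v -> v != 0 -> ~ in_cone gens (- v).

Definition additive_total_order (le : rel 'rV[int]_e) : Prop :=
  [/\ reflexive le, antisymmetric le, transitive le, total le &
      forall a b c, le a b -> le (a + c) (b + c)].

Definition compatible_order (gens : seq 'rV[rat]_e) (le : rel 'rV[int]_e) : Prop :=
  forall p : 'rV[int]_e, in_cone gens (realvec_of_int p) -> le 0 p.

(* ---------- formal series.  A series s in K_C[[x^{1/N}]] is represented by
   its coefficient function p |-> a_p (coefficient of x^{p/N}), p in Z^e. *)
Variable K : fieldType.
Definition series := 'rV[int]_e -> K.

Definition in_series (gens : seq 'rV[rat]_e) (N : nat) (s : series) : Prop :=
  forall p, s p != 0 -> in_cone gens ((N%:R)^-1 *: realvec_of_int p).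

Definition szero : series := fun _ => 0.
Definition sone : series := fun p => if p == 0 then 1 else 0.
Definition sadd (s t : series) : series := fun p => s p + t p.
Definition ssub (s t : series) : series := fun p => s p - t p.
(* product: (s t)_p = sum_{a + b = p} s_a t_b  (a finite sum for series with
   exponents in a line free cone) *)
Definition smul (s t : series) : series :=
  fun p => \sum_(a \in [set: 'rV[int]_e]) s a * t (p - a).
Fixpoint spow (s : series) (k : nat) : series :=
  if k is k'.+1 then smul s (spow s k') else sone.

(* embedding K_C[[x]] -> K_C[[x^{1/N}]] : x^q |-> x^{Nq/N} *)
Definition sembed (N : nat) (c : series) : series :=
  fun p => if [forall k, (N%:Z %| p ord0 k)%Z]
           then c (map_mx (fun z : int => (z %/ N%:Z)%Z) p) else 0.

(* ---------- polynomials in y over series: coefficient lists, low degree first *)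
Definition spoly := seq series.
Definition pcoef (f : spoly) (k : nat) : series := nth szero f k.
Definition peq (f g : spoly) : Prop := forall k, pcoef f k = pcoef g k.
Definition pone : spoly := [:: sone].
Definition pmul (f g : spoly) : spoly :=
  mkseq (fun k p => \sum_(i < k.+1) smul (pcoef f i) (pcoef g (k - i)) p)
        (size f + size g).

Definition in_spoly (gens : seq 'rV[rat]_e) (f : spoly) : Prop :=
  forall k, in_series gens 1 (pcoef f k).

Definition monic_deg (f : spoly) (N : nat) : Prop :=
  size f = N.+1 /\ pcoef f N = sone.

Definition is_unit (gens : seq 'rV[rat]_e) (f : spoly) : Prop :=
  exists g, in_spoly gens g /\ peq (pmul f g) pone.

Definition irreducible_sp (gens : seq 'rV[rat]_e) (f : spoly) : Prop :=
  in_spoly gens f /\ ~ is_unit gens f /\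
  forall g h, in_spoly gens g -> in_spoly gens h -> peq f (pmul g h) ->
    is_unit gens g \/ is_unit gens h.

Definition peval (N : nat) (f : spoly) (z : series) : series :=
  fun p => \sum_(k < size f) smul (sembed N (pcoef f k)) (spow z k) p.

Definition is_root (gens : seq 'rV[rat]_e) (N : nat) (f : spoly) (z : series) : Prop :=
  in_series gens N z /\ peval N f z = szero.

Definition free_poly (gens : seq 'rV[rat]_e) (f : spoly) (N : nat) : Prop :=
  monic_deg f N /\ irreducible_sp gens f /\ exists z, is_root gens N f z.

Definition least_exp (le : rel 'rV[int]_e) (z : series) (m : 'rV[int]_e) : Prop :=
  z m != 0 /\ forall q, z q != 0 -> le m q.

(* m is a characteristic exponent of f (degree n): m/n = O(y_i - y_j) for
   distinct roots y_i, y_j in K_C[[x^{1/n}]] *)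
Definition char_exp (gens : seq 'rV[rat]_e) (le : rel 'rV[int]_e)
  (f : spoly) (n : nat) (m : 'rV[int]_e) : Prop :=
  exists y1 y2, is_root gens n f y1 /\ is_root gens n f y2 /\ y1 <> y2 /\
    least_exp le (ssub y1 y2) m.

Definition char_exps (gens : seq 'rV[rat]_e) (le : rel 'rV[int]_e)
  (f : spoly) (n : nat) (ms : seq 'rV[int]_e) : Prop :=
  sorted (fun a b => le a b && (a != b)) ms /\
  forall m, m \in ms <-> char_exp gens le f n m.

End Defs.

Section Seqs.
Variables (e n : nat) (ms : seq 'rV[int]_e).

Definition Dmat (i : nat) : 'M[int]_(e, e + i) :=
  row_mx (n%:Z)%:M (\matrix_(k < e, j < i) (ms`_j) 0 k).

Definition gcd_minors c (M : 'M[int]_(e, c)) : nat :=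
  \big[gcdn/0%N]_(s : {ffun 'I_e -> 'I_c} |
        [forall j1 : 'I_e, forall j2 : 'I_e, (j1 < j2)%N ==> (s j1 < s j2)%N])
     `|\det (colsub s M)|%N.

(* Dseq i = D_{i+1} in the paper's numbering: D_1 = n^e, D_{i+1} = ... *)
Definition Dseq (i : nat) : nat := gcd_minors (Dmat i).

(* eseq i = e_i = D_i / D_{i+1}, for 1 <= i <= h *)
Definition eseq (i : nat) : nat := (Dseq i.-1 %/ Dseq i)%N.

Definition r0 (k : 'I_e) : 'rV[int]_e := (n%:Z) *: delta_mx 0 k.

(* rseq i = r_{i+1}:  r_1 = m_1,  r_{i+1} = e_i r_i + m_{i+1} - m_i *)
Fixpoint rseq (i : nat) : 'rV[int]_e :=
  if i is i'.+1 then (eseq i)%:Z *: rseq i' + ms`_i - ms`_i' else ms`_0.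

(* sum_k alpha_0^k r_0^k + sum_{j=1}^h alpha_j r_j ; alpha j = alpha_{j+1} *)
Definition semigroup_comb (a0 : 'rV[int]_e) (a : 'I_(size ms) -> nat) : 'rV[int]_e :=
  \sum_(k < e) a0 0 k *: r0 k + \sum_(j < size ms) (a j)%:Z *: rseq j.

End Seqs.
Arguments semigroup_comb [e] n ms a0 a.

(* Main.v *)
Require Import Defs.
From HB Require Import structures.
From mathcomp Require Import all_boot all_order all_algebra.
From mathcomp Require Import boolp classical_sets fsbigop.
From mathcomp Require Import Rstruct.
From mathcomp Require Import fingroup perm.
Import Order.TTheory GRing.Theory Num.Theory.
Local Open Scope ring_scope.
Set Implicit Arguments.
Unset Strict Implicit.

Section P1.
Variables (e : nat) (K : fieldType).

Lemma smul0r (s : series e K) : smul (@szero e K) s = @szero e K.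
Proof. by apply/funext => p; rewrite /smul fsbig1 // => a _; rewrite /szero mul0r. Qed.
Lemma smulr0 (s : series e K) : smul s (@szero e K) = @szero e K.
Proof. by apply/funext => p; rewrite /smul fsbig1 // => a _; rewrite /szero mulr0. Qed.

Lemma smul11 : smul (@sone e K) (@sone e K) = @sone e K.
Proof.
apply/funext => p; rewrite /smul -(fsbig_widen [set 0] setT) //.
  by rewrite fsbig_set1 /sone eqxx mul1r subr0.
move=> a [_ /= Ha]; rewrite /sone ifF ?mul0r //.
by apply/negbTE/eqP => Ha0; apply: Ha.
Qed.

Lemma sone_in gens : in_spoly gens (pone e K).
Proof.
move=> k p; rewrite /pcoef; case: k => [|k] /=; last by rewrite nth_nil /szero eqxx.
rewrite /sone; have [-> _|_] := eqVneq p 0; last by rewrite eqxx.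
exists (fun _ => 0); split=> [i|]; first by [].
rewrite big1 => [|i _]; last by rewrite scale0r.
by rewrite /realvec_of_int; apply/matrixP => i j; rewrite !mxE mulr0.
Qed.

Lemma pone_unit gens : is_unit gens (pone e K).
Proof.
exists (pone e K); split; first exact: sone_in.
move=> k; rewrite /pcoef /pmul /=.
case: k => [|[|k]].
- rewrite (nth_mkseq _ _ (isT : (0 < 1+1)%N)) /=.
  apply/funext => p; rewrite big_ord1 /=.
  by rewrite smul11.
- rewrite (nth_mkseq _ _ (isT : (1 < 1+1)%N)) /=.
  apply/funext => p; rewrite big_ord_recr big_ord1 /=.
  by rewrite smulr0 smul0r /szero addr0.
- by rewrite !nth_default ?size_mkseq.
Qed.

Lemma free_n_gt0 gens (f : spoly e K) n : free_poly gens f n -> (0 < n)%N.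
Proof.
case: n => // [[[sz c0] [[_ [nu _]] _]]].
suff fE : f = pone e K by exfalso; apply: nu; rewrite fE; apply: pone_unit.
move: sz c0; clear nu; case: f => [|a [|b l]] //= _; by rewrite /pcoef /= => ->.
Qed.
End P1.
Lemma gcd_minors_dvd e c (M : 'M[int]_(e, c)) (s : 'I_e -> 'I_c) :
  (gcd_minors M %| `|\det (colsub s M)|)%N.
Proof.
pose u : e.-tuple 'I_c := [tuple s i | i < e].
pose lt := fun a b : 'I_c => (a <= b)%N.
have : perm_eq (sort lt u) u by rewrite perm_sort perm_refl.
have szs : size (sort lt u) == e by rewrite size_sort size_tuple.
have -> : sort lt u = Tuple szs by [].
case/tuple_permP => p Hp.
pose t i := s (p i).
have tE : forall (i : 'I_e) x0, nth x0 (sort lt u) i = t i.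
  move=> i x0; have -> : sort lt u = tval (Tuple szs) by [].
  by rewrite Hp -tnth_nth !tnth_mktuple.
have det_eq : \det (colsub t M) = (-1) ^+ p * \det (colsub s M).
  have -> : colsub t M = col_perm p (colsub s M).
    by apply/matrixP => i j; rewrite !mxE.
  by rewrite col_permE det_mulmx det_perm odd_permV mulrC.
have abs_eq : `|\det (colsub t M)|%N = `|\det (colsub s M)|%N.
  by rewrite det_eq abszMsign.
rewrite -abs_eq.
case: (boolP [exists j1 : 'I_e, exists j2 : 'I_e, (j1 < j2)%N && (t j1 == t j2)]).
  case/existsP => j1 /existsP [j2 /andP [lt12 /eqP te]].
  suff -> : \det (colsub t M) = 0 by rewrite dvdn0.
  rewrite -det_tr; apply: (@determinant_alternate _ _ _ j1 j2).
    by rewrite neq_ltn lt12.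
  by move=> r; rewrite !mxE te.
move=> Hn.
apply: (biggcdn_inf [ffun j => t j]).
  apply/forallP => j1; apply/forallP => j2; apply/implyP => lt12.
  rewrite !ffunE.
  have Hne : t j1 != t j2.
    apply/negP => /eqP te; move/negP: Hn; apply.
    by apply/existsP; exists j1; apply/existsP; exists j2; rewrite lt12 te eqxx.
  rewrite ltn_neqAle Hne /=.
  have srt : sorted lt (sort lt u).
    by apply: sort_sorted => a b; rewrite /lt leq_total.
  have := @sorted_leq_nth _ lt (fun y x z => @leq_trans y x z) (fun a => leqnn _) (t j1) _ srt j1 j2.
  rewrite !inE !tE; apply; rewrite ?(eqP szs) ?ltn_ord //.
  exact: ltnW.
have -> : colsub [ffun j => t j] M = colsub t M.
  by apply/matrixP => i j; rewrite !mxE ffunE.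
exact: dvdnn.
Qed.

Section Lat.
Variables (e n : nat) (ms : seq 'rV[int]_e).

Definition colf (i : nat) (r : 'I_e) : int :=
  if (i < e)%N then n%:Z * ((r : nat) == i)%:R else (ms`_(i - e)) 0 r.

Definition Mg (g : 'I_e -> nat) : 'M[int]_e := \matrix_(r, j) colf (g j) r.

Lemma DmatE t r (j : 'I_(e + t)) : Dmat n ms t r j = colf j r.
Proof.
rewrite /Dmat /colf; case: (splitP j) => [j' jE|j' jE]; rewrite jE.
  have -> : j = lshift t j' by exact: val_inj.
  by rewrite row_mxEl !mxE ?ltn_ord mulr_natr.
have -> : j = rshift e j' by exact: val_inj.
by rewrite row_mxEr mxE /= addKn.
Qed.

Lemma colsub_Dmat t (s : 'I_e -> 'I_(e + t)) :
  colsub s (Dmat n ms t) = Mg (fun j => s j).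
Proof. by apply/matrixP => r j; rewrite mxE [RHS]mxE DmatE. Qed.

Lemma Dseq_gt0 t : (0 < n)%N -> (0 < Dseq n ms t)%N.
Proof.
move=> n0.
have : (Dseq n ms t %| `|\det (colsub (widen_ord (leq_addr t e)) (Dmat n ms t))|)%N.
  exact: gcd_minors_dvd.
have -> : colsub (widen_ord (leq_addr t e)) (Dmat n ms t) = (n%:Z)%:M.
  rewrite colsub_Dmat; apply/matrixP => r j; rewrite !mxE /colf /= ltn_ord.
  by rewrite mulr_natr.
rewrite det_scalar abszX /=; case: (Dseq n ms t) => [|//].
by rewrite dvd0n expn_eq0 eqn0Ngt n0.
Qed.

Lemma Dseq_dvd t : (Dseq n ms t.+1 %| Dseq n ms t)%N.
Proof.
apply/dvdn_biggcdP => s _.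
have -> : colsub s (Dmat n ms t) =
          colsub (fun j => widen_ord (leq_add (leqnn e) (leqnSn t)) (s j) : 'I_(e + t.+1))
                 (Dmat n ms t.+1).
  by rewrite !colsub_Dmat.
exact: gcd_minors_dvd.
Qed.

Definition L t (v : 'rV[int]_e) : Prop :=
  exists (a : 'rV[int]_e) (b : nat -> int),
    v = \sum_(k < e) a 0 k *: r0 n k + \sum_(j < t) b j *: ms`_j.

Lemma L0 t : L t 0.
Proof.
exists 0, (fun _ => 0); rewrite !big1 ?addr0 // => i _; by rewrite ?mxE scale0r.
Qed.

Lemma LD t u v : L t u -> L t v -> L t (u + v).
Proof.
move=> [a [b ->]] [a' [b' ->]]; exists (a + a'), (fun j => b j + b' j).
rewrite addrACA -!big_split /=; congr (_ + _); apply: eq_bigr => i _.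
  by rewrite mxE scalerDl.
by rewrite scalerDl.
Qed.

Lemma LZ t z v : L t v -> L t (z *: v).
Proof.
move=> [a [b ->]]; exists (z *: a), (fun j => z * b j).
rewrite scalerDr !scaler_sumr; congr (_ + _); apply: eq_bigr => i _.
  by rewrite mxE scalerA.
by rewrite scalerA.
Qed.

Lemma LN t v : L t v -> L t (- v).
Proof. by move=> Lv; rewrite -scaleN1r; apply: LZ. Qed.

Lemma LS t v : L t v -> L t.+1 v.
Proof.
move=> [a [b ->]]; exists a, (fun j => if (j < t)%N then b j else 0).
rewrite big_ord_recr /= ltnn scale0r addr0; congr (_ + _).
by apply: eq_bigr => i _; rewrite ltn_ord.
Qed.

Lemma Lle t t' v : (t <= t')%N -> L t v -> L t' v.
Proof.
move=> /subnK <-; elim: (t' - t)%N => // d IH Lv.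
by rewrite addSn; apply: LS; apply: IH.
Qed.

Lemma Lms t j : (j < t)%N -> L t ms`_j.
Proof.
move=> jt; exists 0, (fun i => (i == j)%:R).
rewrite big1 ?add0r => [|i _]; last by rewrite mxE scale0r.
rewrite (bigD1 (Ordinal jt)) //= eqxx scale1r big1 ?addr0 // => i /eqP ne.
suff /negbTE -> : (i : nat) != j by rewrite scale0r.
by apply/eqP => ij; apply: ne; exact: val_inj.
Qed.

Lemma Lr0 t k : L t (r0 n k).
Proof.
exists (delta_mx 0 k), (fun _ => 0).
rewrite [X in _ + X]big1 ?addr0 => [|i _]; last by rewrite scale0r.
rewrite (bigD1 k) //= mxE !eqxx scale1r big1 ?addr0 // => i ne.
by rewrite mxE (negbTE ne) andbF scale0r.
Qed.

Lemma Lrseq_ms t : L t (rseq n ms t - ms`_t).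
Proof.
elim: t => [|t IH] /=; first by rewrite subrr; apply: L0.
have -> : (eseq n ms t.+1)%:Z *: rseq n ms t + ms`_t.+1 - ms`_t - ms`_t.+1 =
          (eseq n ms t.+1)%:Z *: (rseq n ms t - ms`_t) + ((eseq n ms t.+1)%:Z - 1) *: ms`_t.
  by rewrite scalerBr scalerBl scale1r addrA subrK (addrAC _ ms`_t.+1) addrK.
apply: LD; apply: LZ; [exact: LS | exact: Lms].
Qed.

Lemma Lrseq t j : (j < t)%N -> L t (rseq n ms j).
Proof.
move=> jt; apply: (@Lle j.+1) => //.
have -> : rseq n ms j = (rseq n ms j - ms`_j) + ms`_j by rewrite subrK.
apply: LD; [apply: LS; exact: Lrseq_ms | exact: Lms].
Qed.


Definition upd (g : 'I_e -> nat) j0 x := fun j : 'I_e => if j == j0 then x else g j.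

Lemma det_upd g j0 x :
  \det (Mg (upd g j0 x)) = \sum_r colf x r * cofactor (Mg g) r j0.
Proof.
rewrite (expand_det_col _ j0); apply: eq_bigr => r _; rewrite mxE /upd eqxx.
congr (_ * _); rewrite /cofactor; congr (_ * \det _).
apply/matrixP => i j; rewrite !mxE.
by rewrite eq_sym (negbTE (neq_lift j0 j)).
Qed.

Lemma small_dvd t g : (forall j, (g j < e + t)%N) -> (Dseq n ms t %| \det (Mg g))%Z.
Proof.
move=> lt.
have -> : Mg g = colsub (fun j => Ordinal (lt j)) (Dmat n ms t) by rewrite colsub_Dmat.
exact: gcd_minors_dvd.
Qed.

Lemma keyB t k g : (forall j, (g j <= e + t)%N) -> L t (k *: ms`_t) ->
  (Dseq n ms t %| k * \det (Mg g))%Z.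
Proof.
move=> gle [a [b Hk]].
case: (boolP [exists j, g j == (e + t)%N]) => [/existsP [j0 /eqP gj0]| /existsPn none];
  last first.
  apply: dvdz_mull; apply: small_dvd => j.
  by rewrite ltn_neqAle gle (none j).
case: (boolP [exists j1, (j1 != j0) && (g j1 == (e + t)%N)]) =>
    [/existsP [j1 /andP [ne /eqP gj1]] | /existsPn only].
  rewrite -det_tr (@determinant_alternate _ _ _ j1 j0 ne) ?mulr0 //.
  by move=> r; rewrite !mxE gj1 gj0.
have hk : forall r, k * colf (e + t) r =
    \sum_(i < e) a 0 i * colf i r + \sum_(j < t) b j * colf (e + j) r.
  move=> r; rewrite {1}/colf ltnNge leq_addr /= addKn.
  have -> : k * ms`_t 0 r = (k *: ms`_t) 0 r by rewrite mxE.
  rewrite Hk mxE !summxE; congr (_ + _); apply: eq_bigr => i _.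
    by rewrite /r0 !mxE /colf ltn_ord eqxx.
  by rewrite mxE /colf ltnNge leq_addr /= addKn.
have -> : \det (Mg g) = \sum_r colf (e + t) r * cofactor (Mg g) r j0.
  rewrite -det_upd; congr (\det _); apply/matrixP => r j; rewrite !mxE /upd.
  by case: eqP => // ->; rewrite gj0.
rewrite mulr_sumr.
under eq_bigr => r _ do rewrite mulrA hk mulrDl !mulr_suml.
rewrite big_split /= exchange_big [X in _ + X]exchange_big /=.
have smallu : forall x, (x < e + t)%N -> (Dseq n ms t %| \det (Mg (upd g j0 x)))%Z.
  move=> x xlt; apply: small_dvd => j; rewrite /upd; case: eqP => // /eqP jne.
  have := only j; rewrite jne /= => gne.
  by rewrite ltn_neqAle gne gle.
apply: rpredD; apply: rpred_sum => i _.
  under eq_bigr => r _ do rewrite -mulrA.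
  rewrite -mulr_sumr -det_upd; apply: dvdz_mull; apply: smallu.
  exact: ltn_addr.
under eq_bigr => r _ do rewrite -mulrA.
rewrite -mulr_sumr -det_upd; apply: dvdz_mull; apply: smallu.
by rewrite ltn_add2l.
Qed.

Lemma keyA t k : L t (k *: ms`_t) -> (Dseq n ms t %| `|k| * Dseq n ms t.+1)%N.
Proof.
move=> Lk; rewrite {2}/Dseq /gcd_minors.
apply: (big_ind (fun x => (Dseq n ms t %| `|k| * x)%N)).
- by rewrite muln0 dvdn0.
- by move=> x y hx hy; rewrite muln_gcdr dvdn_gcd hx hy.
move=> s _; rewrite -abszM colsub_Dmat.
apply: (@keyB t k (fun j => s j)) => // j.
by rewrite -ltnS -addnS ltn_ord.
Qed.

End Lat.

From mathcomp Require Import zify.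

Lemma L_sum e n (ms : seq 'rV[int]_e) t (I : finType) (P : pred I) (F : I -> 'rV[int]_e) :
  (forall i, P i -> L n ms t (F i)) -> L n ms t (\sum_(i | P i) F i).
Proof.
move=> HF; apply: (big_ind (L n ms t)) => //; [exact: L0 | exact: LD].
Qed.

Lemma r0_entry e n (a : 'rV[int]_e) r :
  (\sum_(k < e) a 0 k *: r0 n k) 0 r = a 0 r * n%:Z.
Proof.
rewrite summxE (bigD1 r) //= big1 ?addr0.
  by rewrite /r0 !mxE !eqxx mulr1 mulrC.
move=> i ne; have ne' : r != i by rewrite eq_sym.
by rewrite /r0 !mxE (negbTE ne') andbF /= !mulr0.
Qed.

Theorem mainTheorem12 (K : closedFieldType) (e : nat) (gens : seq 'rV[rat]_e)
    (le : rel 'rV[int]_e) (f : spoly e K) (n : nat) (ms : seq 'rV[int]_e)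
    (alpha0 beta0 : 'rV[int]_e) (alpha beta : 'I_(size ms) -> nat) :
  [pchar K] =i pred0 ->
  line_free gens ->
  additive_total_order le ->
  compatible_order gens le ->
  free_poly gens f n ->
  char_exps gens le f n ms ->
  (forall j : 'I_(size ms), (alpha j < eseq n ms j.+1)%N) ->
  (forall j : 'I_(size ms), (beta j < eseq n ms j.+1)%N) ->
  semigroup_comb n ms alpha0 alpha = semigroup_comb n ms beta0 beta ->
  alpha0 = beta0 /\ alpha = beta.
Proof.
move=> _ _ _ _ fp _ ha hb heq.
have n0 := free_n_gt0 fp.
set h := size ms in alpha beta ha hb heq *.
pose d0 := alpha0 - beta0.
pose dl := fun j : 'I_h => (alpha j)%:Z - (beta j)%:Z.
have E : \sum_(k < e) d0 0 k *: r0 n k + \sum_(j < h) dl j *: rseq n ms j = 0.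
  transitivity (semigroup_comb n ms alpha0 alpha - semigroup_comb n ms beta0 beta);
    last by rewrite heq subrr.
  rewrite /semigroup_comb opprD addrACA -!sumrB; congr (_ + _); apply: eq_bigr => i _.
    by rewrite !mxE scalerBl.
  by rewrite scalerBl.
have step : forall t : 'I_h, (forall j : 'I_h, (t < j)%N -> dl j = 0) -> dl t = 0.
  move=> t hi.
  have Lt : L n ms t (dl t *: rseq n ms t).
    move: E; rewrite (bigD1 t) //= addrCA => /eqP; rewrite addr_eq0 => /eqP ->.
    apply: LN; apply: LD.
      by apply: L_sum => k _; apply: LZ; apply: Lr0.
    apply: L_sum => j jt; case: (ltngtP j t) => [jlt|tlt|jeq].
    - by apply: LZ; apply: Lrseq.
    - by rewrite hi // scale0r; apply: L0.
    - by exfalso; move: jt; rewrite (val_inj jeq) eqxx.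
  have Lm : L n ms t (dl t *: ms`_t).
    have -> : dl t *: ms`_t = dl t *: rseq n ms t - dl t *: (rseq n ms t - ms`_t).
      by rewrite scalerBr opprB addrC subrK.
    by apply: LD => //; apply: LN; apply: LZ; apply: Lrseq_ms.
  have kA := keyA Lm.
  have D'0 := Dseq_gt0 ms t.+1 n0.
  have Ddv := Dseq_dvd n ms t.
  have hat := ha t; have hbt := hb t.
  rewrite /eseq /= in hat hbt.
  move: kA; rewrite -(divnK Ddv) dvdn_pmul2r // => qd.
  have : (`|dl t| < Dseq n ms t %/ Dseq n ms t.+1)%N by rewrite /dl; lia.
  move=> lt; apply/eqP; rewrite -absz_eq0; apply/eqP.
  case: (posnP `|dl t|%N) => // pos.
  by have := dvdn_leq pos qd; rewrite leqNgt lt.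
have all0 : forall u (j : 'I_h), (h - u <= j)%N -> dl j = 0.
  elim=> [|u IH] j hj.
    by exfalso; move: hj; rewrite subn0 leqNgt ltn_ord.
  case: (leqP (h - u) j) => hj'; first exact: IH.
  apply: step => j' lt; apply: IH; lia.
have abeq : alpha = beta.
  apply/funext => j; have := all0 h j; rewrite subnn => /(_ isT) /eqP.
  by rewrite subr_eq0 => /eqP [].
split=> //.
move: E; rewrite [X in _ + X]big1 => [|j _]; last by rewrite (all0 h j) ?subnn // scale0r.
rewrite addr0 => /matrixP E.
apply/matrixP => i r; rewrite (ord1 i).
have := E 0 r; rewrite r0_entry !mxE => /eqP; rewrite mulf_eq0 => /orP [].
  by rewrite subr_eq0 => /eqP.
by rewrite eqz_nat eqn0Ngt n0.
Qed.
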